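(* Let $\mu$ be a monotone system over $\{0,1\}^V$ and $\theta\in(0,1)$. Then $P_{\mathrm{cl}}$, $P_{\mathrm{s\text{-}GD}}$ and $P_{\pi\text{-GD}}$ all belong to $\mathcal{MC}_\pi$, i.e. each is reversible with respect to $\pi$ and stochastically monotone.
   Context: Monotone system: for every $v$ and all feasible (positive probability) $\sigma\preceq\tau$ in $\{0,1\}^{V\setminus\{v\}}$ (coordinatewise), $\mu^\sigma_v(1)\le\mu^\tau_v(1)$. Tilted $(\theta*\mu)(\sigma)\propto\mu(\sigma)\theta^{\|\sigma\|_1}$. $\mathsf{lift}$: random map $\{0,1\}^V\to\{0,1,\star\}^V$, independently per coordinate $0\mapsto0$, $1\mapsto\star$ w.p. $1-\theta$, $1\mapsto1$ w.p. $\theta$. $\mathsf{contr}$: $0\mapsto0$, $1,\star\mapsto1$. $\pi$: law of $\mathsf{lift}(X)$, $X\sim\mu$, support $\Omega(\pi)$. $P_{\pi\text{-GD}}$: pick $v$ uniformly, resample $X_v$ from $\pi$ conditioned on $X_{V\setminus\{v\}}$. $P_{\mathrm{cl}}$: $X\mapsto\mathsf{lift}(\mathsf{contr}(X))$. $P_{\mathrm{s\text{-}GD}}$: pick $v$ uniformly; if $X_v=\star$ keep it; otherwise resample $X_v\in\{0,1\}$ from $(\theta*\mu)_v^{\sigma_{V\setminus\{v\}}}$ where $\sigma=\mathsf{contr}(X)$. Order $0<1<\star$, coordinatewise partial order on $\{0,1,\star\}^V$. A function $f:\Omega(\pi)\to\mathbb R_{\ge0}$ is increasing if $X\preceq Y\Rightarrow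 f(X)\le f(Y)$. A chain $P$ is stochastically monotone if $Pf$ is increasing for every increasing $f$. $P$ is reversible w.r.t. $\pi$ if $\pi(\sigma)P(\sigma,\tau)=\pi(\tau)P(\tau,\sigma)$ for all $\sigma,\tau$. *)

(* Defs.v *)
From HB Require Import structures.
From mathcomp Require Import all_boot all_order all_algebra.
Set Implicit Arguments. Unset Strict Implicit. Unset Printing Implicit Defensive.
Import Order.TTheory GRing.Theory Num.Theory.
Local Open Scope ring_scope.

Section Defs.
Variables (R : realFieldType) (V : finType).

(* {0,1}^V : false = 0, true = 1 *)
Definition cfg2 := {ffun V -> bool}.
(* {0,1,star}^V encoded by 'I_3 : 0 = 0, 1 = 1, 2 = star (nat order = 0<1<star) *)
Definition cfg3 := {ffun V -> 'I_3}.
Definition sZero : 'I_3 := @Ordinal 3 0 isT.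
Definition sOne  : 'I_3 := @Ordinal 3 1 isT.
Definition sStar : 'I_3 := @Ordinal 3 2 isT.

Definition upd2 (x : cfg2) (v : V) (b : bool) : cfg2 :=
  [ffun u => if u == v then b else x u].
Definition upd3 (x : cfg3) (v : V) (s : 'I_3) : cfg3 :=
  [ffun u => if u == v then s else x u].

Definition is_distr (mu : cfg2 -> R) :=
  (forall x, 0 <= mu x) /\ \sum_(x : cfg2) mu x = 1.

(* sigma_{V\{v}} (represented by any x agreeing off v) has positive probability *)
Definition feasible (mu : cfg2 -> R) (v : V) (x : cfg2) :=
  0 < mu (upd2 x v false) + mu (upd2 x v true).
Definition cond1 (mu : cfg2 -> R) (v : V) (x : cfg2) : R :=
  mu (upd2 x v true) / (mu (upd2 x v false) + mu (upd2 x v true)).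

Definition monotone_system (mu : cfg2 -> R) :=
  is_distr mu /\
  forall (v : V) (x y : cfg2),
    (forall u, u != v -> x u ==> y u) ->
    feasible mu v x -> feasible mu v y -> cond1 mu v x <= cond1 mu v y.

Definition ones (x : cfg2) : nat := #|[set v | x v]|.
Definition tilt (th : R) (mu : cfg2 -> R) (x : cfg2) : R :=
  mu x * th ^+ ones x / \sum_(y : cfg2) mu y * th ^+ ones y.

Definition liftp (th : R) (b : bool) (s : 'I_3) : R :=
  if b then (if s == sOne then th else if s == sStar then 1 - th else 0)
  else (if s == sZero then 1 else 0).
Definition liftK (th : R) (x : cfg2) (y : cfg3) : R :=
  \prod_(v : V) liftp th (x v) (y v).
Definition contr (y : cfg3) : cfg2 := [ffun v => y v != sZero].

Definition pi (th : R) (mu : cfg2 -> R) (y : cfg3) : R :=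
  \sum_(x : cfg2) mu x * liftK th x y.
Definition Omega (th : R) (mu : cfg2 -> R) : pred cfg3 :=
  fun y => 0 < pi th mu y.

Definition agree_off (v : V) (X Y : cfg3) : bool :=
  [forall u, (u != v) ==> (Y u == X u)].

Definition P_piGD (th : R) (mu : cfg2 -> R) (X Y : cfg3) : R :=
  (#|V|%:R)^-1 * \sum_(v : V)
     (if agree_off v X Y
      then pi th mu Y / \sum_(s : 'I_3) pi th mu (upd3 X v s) else 0).

Definition P_cl (th : R) (mu : cfg2 -> R) (X Y : cfg3) : R :=
  liftK th (contr X) Y.

Definition sGDv (th : R) (mu : cfg2 -> R) (v : V) (X Y : cfg3) : R :=
  if X v == sStar then (Y == X)%:R
  else if agree_off v X Y && (Y v != sStar) then
    (let c := cond1 (tilt th mu) v (contr X) in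
     if Y v == sOne then c else 1 - c)
  else 0.
Definition P_sGD (th : R) (mu : cfg2 -> R) (X Y : cfg3) : R :=
  (#|V|%:R)^-1 * \sum_(v : V) sGDv th mu v X Y.

Definition reversible (P : cfg3 -> cfg3 -> R) (p : cfg3 -> R) (S : pred cfg3) :=
  forall x y, S x -> S y -> p x * P x y = p y * P y x.
Definition le3 (X Y : cfg3) : bool := [forall v, (X v <= Y v)%N].
Definition increasing_on (S : pred cfg3) (f : cfg3 -> R) :=
  forall X Y, S X -> S Y -> le3 X Y -> f X <= f Y.
Definition stoch_monotone (P : cfg3 -> cfg3 -> R) (S : pred cfg3) :=
  forall f : cfg3 -> R, (forall X, S X -> 0 <= f X) -> increasing_on S f ->
    increasing_on S (fun X => \sum_(Y | S Y) P X Y * f Y).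

Definition inMC (th : R) (mu : cfg2 -> R) (P : cfg3 -> cfg3 -> R) :=
  reversible P (pi th mu) (Omega th mu) /\ stoch_monotone P (Omega th mu).

End Defs.

(* Main.v *)
Require Import Defs.
From mathcomp Require Import all_boot all_order all_algebra.
From mathcomp Require Import ring lra.
Set Implicit Arguments. Unset Strict Implicit. Unset Printing Implicit Defensive.
Import Order.TTheory GRing.Theory Num.Theory.
Local Open Scope ring_scope.

Section S.
Variables (R : realFieldType) (V : finType) (th : R) (mu : cfg2 V -> R).

Lemma I3_cases (s : 'I_3) : [\/ s = sZero, s = sOne | s = sStar].
Proof.
case: s => [[|[|[|n]]] Hs]; [constructor 1|constructor 2|constructor 3|done];
  exact: val_inj.
Qed.

Definition lw (s : 'I_3) : R :=
  if s == sZero then 1 else if s == sOne then th else 1 - th.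
Definition W (y : cfg3 V) : R := \prod_u lw (y u).

Lemma liftK_E (x : cfg2 V) (y : cfg3 V) : Defs.liftK th x y = if x == contr y then W y else 0.
Proof.
rewrite /Defs.liftK /W; case: eqP => [->|/eqP].
  apply: eq_bigr => u _; rewrite /contr ffunE.
  by case: (I3_cases (y u)) => ->.
move=> Hne; have [u Hu] : exists u, x u != contr y u.
  apply/existsP; rewrite -negb_forall; apply: contra Hne => /forallP H.
  by apply/eqP/ffunP => u; apply/eqP.
rewrite (bigD1 u) //= [liftp _ _ _](_ : _ = 0) ?mul0r //.
move: Hu; rewrite /contr ffunE /liftp.
by case: (x u); case: (I3_cases (y u)) => ->.
Qed.

Lemma piE (y : cfg3 V) : Defs.pi th mu y = mu (contr y) * W y.
Proof.
rewrite /Defs.pi (bigD1 (contr y)) //= liftK_E eqxx big1 ?addr0 // => x Hx.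
by rewrite liftK_E (negbTE Hx) mulr0.
Qed.


Hypothesis Hth : 0 < th < 1.

Lemma lw_gt0 s : 0 < lw s.
Proof.
case/andP: Hth => h0 h1; rewrite /lw.
by case: (I3_cases s) => -> //=; rewrite subr_gt0.
Qed.

Lemma W_gt0 y : 0 < W y.
Proof. by apply: prodr_gt0 => u _; apply: lw_gt0. Qed.

Lemma inS y : Omega th mu y = (0 < mu (contr y)).
Proof. by rewrite /Omega piE pmulr_lgt0 // W_gt0. Qed.

Lemma upd3_v (X : cfg3 V) v s : upd3 X v s v = s.
Proof. by rewrite ffunE eqxx. Qed.

Lemma contr_upd3 (X : cfg3 V) v s :
  contr (upd3 X v s) = upd2 (contr X) v (s != sZero).
Proof. by apply/ffunP => u; rewrite !ffunE; case: (u == v). Qed.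

Definition Kv (X : cfg3 V) v : R := \prod_(u | u != v) lw (X u).

Lemma Kv_gt0 X v : 0 < Kv X v.
Proof. by apply: prodr_gt0 => u _; apply: lw_gt0. Qed.

Lemma W_upd3 (X : cfg3 V) v s : W (upd3 X v s) = lw s * Kv X v.
Proof.
rewrite /W (bigD1 v) //= upd3_v; congr (_ * _); apply: eq_bigr => u Hu.
by rewrite ffunE (negbTE Hu).
Qed.

Lemma W_split (X : cfg3 V) v : W X = lw (X v) * Kv X v.
Proof. by rewrite /W (bigD1 v). Qed.

Lemma agree_offP v (X Y : cfg3 V) :
  reflect (forall u, u != v -> Y u = X u) (agree_off v X Y).
Proof.
apply: (iffP forallP) => [H u Hu|H u]; first by move/implyP/(_ Hu)/eqP: (H u).
by apply/implyP => Hu; rewrite H.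
Qed.

Lemma agree_offC v (X Y : cfg3 V) : agree_off v X Y = agree_off v Y X.
Proof.
by apply/agree_offP/agree_offP => H u Hu; rewrite H.
Qed.

Lemma upd3_agree v (X Y : cfg3 V) s :
  agree_off v X Y -> upd3 X v s = upd3 Y v s.
Proof.
move/agree_offP => H; apply/ffunP => u; rewrite !ffunE.
by case: eqP => // /eqP Hu; rewrite H.
Qed.

Lemma Kv_agree v (X Y : cfg3 V) : agree_off v X Y -> Kv X v = Kv Y v.
Proof. by move/agree_offP => H; apply: eq_bigr => u Hu; rewrite H. Qed.

Lemma Kv_upd3 (X : cfg3 V) v s : Kv (upd3 X v s) v = Kv X v.
Proof. by apply: eq_bigr => u Hu; rewrite ffunE (negbTE Hu). Qed.

Lemma upd2_agree v (X Y : cfg3 V) b :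
  agree_off v X Y -> upd2 (contr X) v b = upd2 (contr Y) v b.
Proof.
move/agree_offP => H; apply/ffunP => u; rewrite !ffunE.
by case: eqP => // /eqP Hu; rewrite H.
Qed.

Lemma agree_upd v (X Y : cfg3 V) s :
  (agree_off v X Y && (Y v == s)) = (Y == upd3 X v s).
Proof.
apply/andP/eqP => [[/agree_offP H /eqP Hs]|->].
  apply/ffunP => u; rewrite ffunE; case: eqP => [->//|/eqP Hu]; exact: H.
by rewrite upd3_v eqxx; split => //; apply/agree_offP => u Hu; rewrite ffunE (negbTE Hu).
Qed.

Lemma sum_agree v (X : cfg3 V) (h : cfg3 V -> R) :
  \sum_(Y : cfg3 V) (if agree_off v X Y then h Y else 0) =
  \sum_(s : 'I_3) h (upd3 X v s).
Proof.
rewrite -big_mkcond /= (partition_big (fun Y : cfg3 V => Y v) predT) //=.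
apply: eq_bigr => s _; apply: big_pred1 => Y /=; exact: agree_upd.
Qed.

Lemma sum_I3 (F : 'I_3 -> R) : \sum_(s : 'I_3) F s = F sZero + F sOne + F sStar.
Proof.
rewrite !big_ord_recr big_ord0 /= add0r; congr (_ + _ + _); congr F; exact: val_inj.
Qed.

Lemma le3_upd (X X' : cfg3 V) v (s s' : 'I_3) :
  le3 X X' -> (s <= s')%N -> le3 (upd3 X v s) (upd3 X' v s').
Proof.
move=> /forallP H Hs; apply/forallP => u; rewrite !ffunE; case: eqP => // _; exact: H.
Qed.

Lemma le3_updl (X X' : cfg3 V) v (s : 'I_3) :
  le3 X X' -> (s <= X' v)%N -> le3 (upd3 X v s) X'.
Proof.
move=> /forallP H Hs; apply/forallP => u; rewrite !ffunE; case: eqP => [->//|_]; exact: H.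
Qed.


Lemma cl_rev : reversible (P_cl th mu) (Defs.pi th mu) (Omega th mu).
Proof.
move=> X Y _ _; rewrite /P_cl !piE !liftK_E.
case: eqP => [->|H1]; case: eqP => [H2|H2]; rewrite ?mulr0 //.
all: try by [case: H2 | case: H1 ].
by ring.
Qed.

Definition phi (x : cfg2 V) (Y : cfg3 V) : cfg3 V :=
  [ffun u => if x u then Y u else sZero].

Lemma prod_ind (b : V -> bool) : \prod_u ((b u)%:R : R) = ([forall u, b u])%:R.
Proof.
case: (boolP [forall u, b u]) => [/forallP H|].
  by apply: big1 => u _; rewrite H.
rewrite negb_forall => /existsP [u Hu]; rewrite (bigD1 u) //= (negbTE Hu) mul0r.
by [].
Qed.

Lemma liftp_sum b : \sum_(s : 'I_3) liftp th b s = 1.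
Proof. by rewrite sum_I3 /liftp; case: b => /=; ring. Qed.

Lemma fiber (x x' : cfg2 V) (Hle : forall u, x u ==> x' u) (Y : cfg3 V) :
  \sum_(Y' | phi x Y' == Y) Defs.liftK th x' Y' = Defs.liftK th x Y.
Proof.
pose H u (s : 'I_3) := liftp th (x' u) s *
   (if x u then ((s == Y u)%:R : R) else (Y u == sZero)%:R).
rewrite big_mkcond /=.
transitivity (\sum_(Y' : {ffun V -> 'I_3}) \prod_u H u (Y' u)).
  apply: eq_bigr => Y' _; rewrite /H big_split /=.
  rewrite [X in _ * X](eq_bigr (fun u => ((if x u then Y' u == Y u else Y u == sZero) : bool)%:R));
    last by move=> u _; case: (x u).
  rewrite prod_ind.
  have -> : [forall u, if x u then Y' u == Y u else Y u == sZero] = (phi x Y' == Y).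
    apply/forallP/eqP => [Hf|<- u]; last by rewrite ffunE; case: (x u).
    apply/ffunP => u; rewrite ffunE; move: (Hf u); case: (x u) => /eqP //.
  rewrite /Defs.liftK; case: (phi x Y' == Y); by rewrite ?mulr1 ?mulr0.
rewrite -bigA_distr_bigA /Defs.liftK; apply: eq_bigr => u _.
rewrite /H; move: (Hle u); case: (x u); case: (x' u) => //= _.
- rewrite sum_I3 /liftp /=; case: (I3_cases (Y u)) => -> /=; ring.
- rewrite sum_I3 /=; case: (I3_cases (Y u)) => -> /=; ring.
- rewrite sum_I3 /=; case: (I3_cases (Y u)) => -> /=; ring.
Qed.

Lemma push (x x' : cfg2 V) (Hle : forall u, x u ==> x' u) (g : cfg3 V -> R) :
  \sum_(Y : cfg3 V) Defs.liftK th x Y * g Y =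
  \sum_(Y' : cfg3 V) Defs.liftK th x' Y' * g (phi x Y').
Proof.
symmetry; rewrite (partition_big (phi x) predT) //=; apply: eq_bigr => Y _.
rewrite -(fiber Hle Y) big_distrl /=; apply: eq_bigr => Y' /eqP ->; done.
Qed.


Lemma mask_sum (S : pred (cfg3 V)) (P : cfg3 V -> R) (f : cfg3 V -> R) :
  \sum_(Y | S Y) P Y * f Y = \sum_Y P Y * (if S Y then f Y else 0).
Proof. by rewrite big_mkcond; apply: eq_bigr => Y _; case: (S Y); rewrite ?mulr0. Qed.

Lemma le3_contr (X X' : cfg3 V) : le3 X X' -> forall u, contr X u ==> contr X' u.
Proof.
move=> /forallP H u; rewrite !ffunE; apply/implyP; move: (H u).
by case: (X u) => [[|n] Hn] //=; case: (X' u) => [[|m] Hm].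
Qed.

Lemma cl_mono : stoch_monotone (P_cl th mu) (Omega th mu).
Proof.
move=> f f0 finc X X' SX SX' le; rewrite /P_cl mask_sum [X in _ <= X]mask_sum.
rewrite (push (le3_contr le)); apply: ler_sum => Y' _.
rewrite liftK_E; case: eqP => [Hc|_]; last by rewrite !mul0r.
apply: ler_wpM2l; first exact: ltW (W_gt0 _).
have SY' : Omega th mu Y' by rewrite inS -Hc -inS.
have Hcp : contr (phi (contr X) Y') = contr X.
  apply/ffunP => u; rewrite !ffunE; case Hu: (X u != sZero) => //=.
  by move: (le3_contr le u); rewrite Hc !ffunE Hu.
have SP : Omega th mu (phi (contr X) Y') by rewrite inS Hcp -inS.
rewrite SY' SP; apply: finc => //.
apply/forallP => u; rewrite ffunE; case: (contr X u) => //.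
Qed.


Lemma mul_ge0_cond (a b : R) : 0 <= a -> (0 < a -> 0 <= b) -> 0 <= a * b.
Proof.
rewrite le0r => /orP [/eqP ->|Ha H]; first by rewrite mul0r.
by apply: mulr_ge0; [exact: ltW | exact: H].
Qed.

Lemma key3 (c c' t p0 p1 p2 q0 q1 q2 : R) : 0 <= c -> c <= c' -> c' <= 1 -> 0 < t < 1 ->
  (c' < 1 -> p0 <= q0) -> (c < c' -> p0 <= q1 /\ p0 <= q2) ->
  (0 < c -> p1 <= q1 /\ p2 <= q2) ->
  (1 - c) * p0 + t * c * p1 + (1 - t) * c * p2 <=
  (1 - c') * q0 + t * c' * q1 + (1 - t) * c' * q2.
Proof.
move=> c0 cc' c'1 /andP [t0 t1] H1 H2 H3.
have A : 0 <= (1 - c') * (q0 - p0).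
  apply: mul_ge0_cond; first by rewrite subr_ge0.
  by rewrite subr_gt0 => /H1; rewrite subr_ge0.
have B : 0 <= (c' - c) * (t * (q1 - p0) + (1 - t) * (q2 - p0)).
  apply: mul_ge0_cond; first by rewrite subr_ge0.
  rewrite subr_gt0 => /H2 [h1 h2]; apply: addr_ge0; apply: mulr_ge0;
    rewrite ?subr_ge0 //; exact: ltW.
have C : 0 <= c * (t * (q1 - p1) + (1 - t) * (q2 - p2)).
  apply: mul_ge0_cond => // /H3 [h1 h2]; apply: addr_ge0; apply: mulr_ge0;
    rewrite ?subr_ge0 //; exact: ltW.
rewrite -subr_ge0.
have -> : (1 - c') * q0 + t * c' * q1 + (1 - t) * c' * q2 -
    ((1 - c) * p0 + t * c * p1 + (1 - t) * c * p2) =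
  (1 - c') * (q0 - p0) + (c' - c) * (t * (q1 - p0) + (1 - t) * (q2 - p0)) +
  c * (t * (q1 - p1) + (1 - t) * (q2 - p2)) by ring.
by rewrite !addr_ge0.
Qed.

Lemma upd2_id (x : cfg2 V) v : upd2 x v (x v) = x.
Proof. by apply/ffunP => u; rewrite ffunE; case: eqP => // ->. Qed.

Definition mb (X : cfg3 V) v b := mu (upd2 (contr X) v b).

Lemma piE_upd (X : cfg3 V) v s :
  Defs.pi th mu (upd3 X v s) = mb X v (s != sZero) * (lw s * Kv X v).
Proof. by rewrite piE contr_upd3 W_upd3. Qed.

Lemma Omega_upd (X : cfg3 V) v s :
  Omega th mu (upd3 X v s) = (0 < mb X v (s != sZero)).
Proof. by rewrite inS contr_upd3. Qed.

Definition Zv (X : cfg3 V) v := \sum_(s : 'I_3) Defs.pi th mu (upd3 X v s).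

Lemma ZvE X v : Zv X v = (mb X v false + mb X v true) * Kv X v.
Proof. by rewrite /Zv sum_I3 !piE_upd /lw /=; ring. Qed.

Lemma Zv_agree v (X Y : cfg3 V) : agree_off v X Y -> Zv X v = Zv Y v.
Proof. by move=> H; apply: eq_bigr => s _; rewrite (upd3_agree _ H). Qed.

Lemma piGD_rev : reversible (P_piGD th mu) (Defs.pi th mu) (Omega th mu).
Proof.
move=> X Y _ _; rewrite /P_piGD [LHS]mulrCA [RHS]mulrCA; congr (_ * _); rewrite !mulr_sumr.
apply: eq_bigr => v _; rewrite agree_offC.
case: ifP => H; last by rewrite !mulr0.
rewrite -/(Zv X v) -/(Zv Y v) (Zv_agree H); ring.
Qed.


Hypothesis Hms : monotone_system mu.

Lemma mu_ge0 x : 0 <= mu x.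
Proof. by case: Hms => [[H _] _]. Qed.

Lemma mb_ge0 X v b : 0 <= mb X v b.
Proof. exact: mu_ge0. Qed.

Lemma feasX (X : cfg3 V) v : Omega th mu X -> 0 < mb X v false + mb X v true.
Proof.
rewrite inS -(upd2_id (contr X) v) /mb => H.
case: (contr X v) H => H.
  by rewrite ltr_wpDl // mu_ge0.
by rewrite ltr_wpDr // mu_ge0.
Qed.

Lemma c_range (X : cfg3 V) v : Omega th mu X ->
  0 <= cond1 mu v (contr X) <= 1.
Proof.
move=> /(feasX v) H; rewrite /cond1 -/(mb X v true) -/(mb X v false).
rewrite divr_ge0 ?mb_ge0 ?(ltW H) //= ler_pdivrMr // mul1r lerDr mb_ge0 //.
Qed.

Lemma c_gt0 (X : cfg3 V) v : Omega th mu X -> 0 < cond1 mu v (contr X) ->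
  0 < mb X v true.
Proof.
move=> _; rewrite /cond1 -/(mb X v true) -/(mb X v false) => Hc.
rewrite lt0r mb_ge0 andbT; apply: contraTneq Hc => ->; by rewrite mul0r ltxx.
Qed.

Lemma c_lt1 (X : cfg3 V) v : Omega th mu X -> cond1 mu v (contr X) < 1 ->
  0 < mb X v false.
Proof.
move=> /(feasX v) H; rewrite /cond1 -/(mb X v true) -/(mb X v false) => Hc.
rewrite lt0r mb_ge0 andbT.
apply: contraTneq Hc => E; rewrite E add0r divff ?ltxx //.
by move: H; rewrite E add0r => /gt_eqF ->.
Qed.

Lemma c_mono (X X' : cfg3 V) v : Omega th mu X -> Omega th mu X' -> le3 X X' ->
  cond1 mu v (contr X) <= cond1 mu v (contr X').
Proof.
move=> SX SX' le; case: Hms => _ H; apply: H.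
- by move=> u _; apply: le3_contr.
- exact: (feasX v SX).
- exact: (feasX v SX').
Qed.

Lemma swap_sum (c : R) (a : V -> cfg3 V -> R) (g : cfg3 V -> R) :
  \sum_(Y : cfg3 V) (c * \sum_v a v Y) * g Y = c * \sum_v \sum_(Y : cfg3 V) a v Y * g Y.
Proof.
transitivity (\sum_(Y : cfg3 V) \sum_v c * (a v Y * g Y)).
  apply: eq_bigr => Y _; rewrite -mulrA mulr_suml mulr_sumr.
  by apply: eq_bigr => v _; rewrite mulrA.
rewrite exchange_big mulr_sumr; apply: eq_bigr => v _; by rewrite mulr_sumr.
Qed.


Lemma piGD_v (X : cfg3 V) v (g : cfg3 V -> R) : Omega th mu X ->
  \sum_(Y : cfg3 V) (if agree_off v X Y then Defs.pi th mu Y / Zv X v else 0) * g Y =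
  (1 - cond1 mu v (contr X)) * g (upd3 X v sZero) +
  th * cond1 mu v (contr X) * g (upd3 X v sOne) +
  (1 - th) * cond1 mu v (contr X) * g (upd3 X v sStar).
Proof.
move=> SX.
rewrite (eq_bigr (fun Y => if agree_off v X Y then Defs.pi th mu Y / Zv X v * g Y else 0));
  last by move=> Y _; case: ifP; rewrite ?mul0r.
rewrite sum_agree sum_I3 !piE_upd ZvE /cond1 -/(mb X v true) -/(mb X v false) /lw /=.
have H1 := feasX v SX; have H2 := Kv_gt0 X v.
set m0 := mb X v false; set m1 := mb X v true; set K := Kv X v.
have N1 : m0 + m1 != 0 by rewrite gt_eqF.
have N2 : K != 0 by rewrite gt_eqF.
field; by rewrite N1 N2.
Qed.


Lemma piGD_mono : stoch_monotone (P_piGD th mu) (Omega th mu).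
Proof.
move=> f f0 finc X X' SX SX' le.
rewrite /P_piGD mask_sum [X in _ <= X]mask_sum !swap_sum.
apply: ler_wpM2l; first by rewrite invr_ge0 ler0n.
apply: ler_sum => v _; rewrite !piGD_v //.
have [c0 c1] := andP (c_range v SX); have [c0' c1'] := andP (c_range v SX').
have cc := c_mono v SX SX' le.
apply: key3 => // [Hc'|Hc|Hc].
- have Hc : cond1 mu v (contr X) < 1 by apply: le_lt_trans Hc'.
  have S0 : Omega th mu (upd3 X v sZero) by rewrite Omega_upd; exact: c_lt1.
  have S0' : Omega th mu (upd3 X' v sZero) by rewrite Omega_upd; exact: c_lt1.
  by rewrite S0 S0'; apply: finc => //; apply: le3_upd.
- have Hc1 : cond1 mu v (contr X) < 1 by apply: lt_le_trans Hc _.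
  have Hc2 : 0 < cond1 mu v (contr X') by apply: le_lt_trans Hc.
  have S0 : Omega th mu (upd3 X v sZero) by rewrite Omega_upd; exact: c_lt1.
  have S1' : Omega th mu (upd3 X' v sOne) by rewrite Omega_upd; exact: c_gt0.
  have S2' : Omega th mu (upd3 X' v sStar) by rewrite Omega_upd; exact: c_gt0.
  by rewrite S0 S1' S2'; split; apply: finc => //; apply: le3_upd.
- have Hc2 : 0 < cond1 mu v (contr X') by apply: lt_le_trans cc.
  have S1 : Omega th mu (upd3 X v sOne) by rewrite Omega_upd; exact: c_gt0.
  have S2 : Omega th mu (upd3 X v sStar) by rewrite Omega_upd; exact: c_gt0.
  have S1' : Omega th mu (upd3 X' v sOne) by rewrite Omega_upd; exact: c_gt0.
  have S2' : Omega th mu (upd3 X' v sStar) by rewrite Omega_upd; exact: c_gt0.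
  by rewrite S1 S2 S1' S2'; split; apply: finc => //; apply: le3_upd.
Qed.


Lemma ones_upd (x : cfg2 V) v : ones (upd2 x v true) = (ones (upd2 x v false)).+1.
Proof.
rewrite /ones.
have -> : [set u | upd2 x v true u] = v |: [set u | upd2 x v false u].
  by apply/setP => u; rewrite !inE !ffunE; case: eqP.
by rewrite cardsU1 !inE ffunE eqxx.
Qed.

Lemma Zt_neq0 : \sum_(y : cfg2 V) mu y * th ^+ ones y != 0.
Proof.
case/andP: Hth => t0 _.
apply/eqP => HZ.
have H0 : forall y : cfg2 V, true -> 0 <= mu y * th ^+ ones y.
  by move=> y _; apply: mulr_ge0; [exact: mu_ge0 | exact: exprn_ge0 (ltW t0)].
have H := psumr_eq0P H0 HZ.
have H' : forall y, mu y = 0.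
  move=> y; have /eqP := H y isT.
  by rewrite mulf_eq0 expf_eq0 (gt_eqF t0) andbF orbF => /eqP.
case: Hms => [[_ Hs] _]; move: Hs; rewrite big1 // => /eqP; by rewrite eq_sym oner_eq0.
Qed.

Definition ct (X : cfg3 V) v := cond1 (tilt th mu) v (contr X).

Lemma D_gt0 (X : cfg3 V) v : Omega th mu X ->
  0 < mb X v false + mb X v true * th.
Proof.
move=> /(feasX v) H; have := mb_ge0 X v false; have := mb_ge0 X v true.
case/andP: Hth => t0 t1; nra.
Qed.

Lemma ctE (X : cfg3 V) v : Omega th mu X ->
  ct X v = mb X v true * th / (mb X v false + mb X v true * th).
Proof.
move=> SX; have HD := D_gt0 v SX.
rewrite /ct /cond1 /tilt ones_upd exprS -/(mb X v true) -/(mb X v false).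
have HZ := Zt_neq0.
set Z := \sum_(y : cfg2 V) mu y * th ^+ ones y in HZ *.
set k := ones _.
have Hk : th ^+ k != 0 by rewrite expf_neq0 // gt_eqF //; case/andP: Hth.
have HD' : mb X v false + mb X v true * th != 0 by rewrite gt_eqF.
field; rewrite HD' HZ /=.
have -> : mb X v false * th ^+ k + mb X v true * (th * th ^+ k) =
  (mb X v false + mb X v true * th) * th ^+ k by ring.
by rewrite mulf_neq0.
Qed.


Lemma ct_range (X : cfg3 V) v : Omega th mu X -> 0 <= ct X v <= 1.
Proof.
move=> SX; rewrite ctE //; have HD := D_gt0 v SX.
case/andP: Hth => t0 t1.
rewrite divr_ge0 ?mulr_ge0 ?mb_ge0 ?(ltW t0) ?(ltW HD) //=.
by rewrite ler_pdivrMr // mul1r lerDr mb_ge0.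
Qed.

Lemma ct_gt0 (X : cfg3 V) v : Omega th mu X -> 0 < ct X v -> 0 < mb X v true.
Proof.
move=> SX; rewrite ctE // => Hc.
rewrite lt0r mb_ge0 andbT; apply: contraTneq Hc => ->; by rewrite !mul0r ltxx.
Qed.

Lemma ct_lt1 (X : cfg3 V) v : Omega th mu X -> ct X v < 1 -> 0 < mb X v false.
Proof.
move=> SX; rewrite ctE // => Hc; have HD := D_gt0 v SX.
rewrite lt0r mb_ge0 andbT; apply: contraTneq Hc => E.
rewrite E add0r divff ?ltxx //; by move: HD; rewrite E add0r => /gt_eqF ->.
Qed.

Lemma ct_mono (X X' : cfg3 V) v : Omega th mu X -> Omega th mu X' -> le3 X X' ->
  ct X v <= ct X' v.
Proof.
move=> SX SX' le; have := c_mono v SX SX' le.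
have H1 := feasX v SX; have H1' := feasX v SX'.
have HD := D_gt0 v SX; have HD' := D_gt0 v SX'.
rewrite !ctE // /cond1 -/(mb X v true) -/(mb X v false) -/(mb X' v true) -/(mb X' v false).
rewrite ler_pdivrMr // mulrAC ler_pdivlMr // => H.
rewrite ler_pdivrMr // mulrAC ler_pdivlMr //.
have := mb_ge0 X v false; have := mb_ge0 X v true.
have := mb_ge0 X' v false; have := mb_ge0 X' v true.
case/andP: Hth => t0 t1; nra.
Qed.

Lemma sGD_star (X : cfg3 V) v (g : cfg3 V -> R) : X v == sStar ->
  \sum_(Y : cfg3 V) sGDv th mu v X Y * g Y = g X.
Proof.
move=> H; rewrite /sGDv H (bigD1 X) //= eqxx mul1r big1 ?addr0 // => Y HY.
by rewrite (negbTE HY) mul0r.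
Qed.

Lemma sGD_ns (X : cfg3 V) v (g : cfg3 V -> R) : X v != sStar ->
  \sum_(Y : cfg3 V) sGDv th mu v X Y * g Y =
  (1 - ct X v) * g (upd3 X v sZero) + ct X v * g (upd3 X v sOne).
Proof.
move=> H; rewrite /sGDv (negbTE H) /=.
rewrite (eq_bigr (fun Y => if agree_off v X Y then
   (if Y v != sStar then (if Y v == sOne then ct X v else 1 - ct X v) else 0) * g Y
   else 0)); last by move=> Y _; case: (agree_off v X Y); rewrite /= ?mul0r.
rewrite sum_agree sum_I3 !upd3_v /=; ring.
Qed.


Lemma key2 (c c' p0 p1 q0 q1 : R) : 0 <= c -> c <= c' -> c' <= 1 ->
  (c' < 1 -> p0 <= q0) -> (c < c' -> p0 <= q1) -> (0 < c -> p1 <= q1) ->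
  (1 - c) * p0 + c * p1 <= (1 - c') * q0 + c' * q1.
Proof.
move=> c0 cc' c'1 H1 H2 H3.
have A : 0 <= (1 - c') * (q0 - p0).
  apply: mul_ge0_cond; first by rewrite subr_ge0.
  by rewrite subr_gt0 => /H1; rewrite subr_ge0.
have B : 0 <= (c' - c) * (q1 - p0).
  apply: mul_ge0_cond; first by rewrite subr_ge0.
  by rewrite subr_gt0 => /H2; rewrite subr_ge0.
have C : 0 <= c * (q1 - p1).
  by apply: mul_ge0_cond => // /H3; rewrite subr_ge0.
rewrite -subr_ge0.
have -> : (1 - c') * q0 + c' * q1 - ((1 - c) * p0 + c * p1) =
  (1 - c') * (q0 - p0) + (c' - c) * (q1 - p0) + c * (q1 - p1) by ring.
by rewrite !addr_ge0.
Qed.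

Lemma convex2 (c p0 p1 M : R) : 0 <= c -> c <= 1 ->
  (c < 1 -> p0 <= M) -> (0 < c -> p1 <= M) -> (1 - c) * p0 + c * p1 <= M.
Proof.
move=> c0 c1 H1 H2.
have A : 0 <= (1 - c) * (M - p0).
  apply: mul_ge0_cond; first by rewrite subr_ge0.
  by rewrite subr_gt0 => /H1; rewrite subr_ge0.
have C : 0 <= c * (M - p1).
  by apply: mul_ge0_cond => // /H2; rewrite subr_ge0.
rewrite -subr_ge0.
have -> : M - ((1 - c) * p0 + c * p1) = (1 - c) * (M - p0) + c * (M - p1) by ring.
by rewrite !addr_ge0.
Qed.

Lemma star_le (X X' : cfg3 V) v : le3 X X' -> X v == sStar -> X' v == sStar.
Proof.
move=> /forallP /(_ v) H /eqP E; move: H; rewrite E.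
by case: (X' v) => [[|[|[|n]]] Hn].
Qed.

Lemma sGD_mono : stoch_monotone (P_sGD th mu) (Omega th mu).
Proof.
move=> f f0 finc X X' SX SX' le.
rewrite /P_sGD mask_sum [X in _ <= X]mask_sum !swap_sum.
apply: ler_wpM2l; first by rewrite invr_ge0 ler0n.
apply: ler_sum => v _.
case Xs: (X v == sStar).
  rewrite !sGD_star // ?(star_le le Xs) // SX SX'; exact: finc.
rewrite sGD_ns ?Xs //.
have [c0 c1] := andP (ct_range v SX).
case X's: (X' v == sStar).
  rewrite sGD_star // SX'; apply: convex2 => // Hc.
    have S0 : Omega th mu (upd3 X v sZero) by rewrite Omega_upd; exact: ct_lt1.
    by rewrite S0; apply: finc => //; apply: le3_updl => //; rewrite (eqP X's).
  have S1 : Omega th mu (upd3 X v sOne) by rewrite Omega_upd; exact: ct_gt0.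
  by rewrite S1; apply: finc => //; apply: le3_updl => //; rewrite (eqP X's).
rewrite sGD_ns ?X's //.
have [c0' c1'] := andP (ct_range v SX').
have cc := ct_mono v SX SX' le.
apply: key2 => // [Hc'|Hc|Hc].
- have Hc : ct X v < 1 by apply: le_lt_trans Hc'.
  have S0 : Omega th mu (upd3 X v sZero) by rewrite Omega_upd; exact: ct_lt1.
  have S0' : Omega th mu (upd3 X' v sZero) by rewrite Omega_upd; exact: ct_lt1.
  by rewrite S0 S0'; apply: finc => //; apply: le3_upd.
- have Hc1 : ct X v < 1 by apply: lt_le_trans Hc _.
  have Hc2 : 0 < ct X' v by apply: le_lt_trans Hc.
  have S0 : Omega th mu (upd3 X v sZero) by rewrite Omega_upd; exact: ct_lt1.
  have S1' : Omega th mu (upd3 X' v sOne) by rewrite Omega_upd; exact: ct_gt0.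
  by rewrite S0 S1'; apply: finc => //; apply: le3_upd.
- have Hc2 : 0 < ct X' v by apply: lt_le_trans cc.
  have S1 : Omega th mu (upd3 X v sOne) by rewrite Omega_upd; exact: ct_gt0.
  have S1' : Omega th mu (upd3 X' v sOne) by rewrite Omega_upd; exact: ct_gt0.
  by rewrite S1 S1'; apply: finc => //; apply: le3_upd.
Qed.


Lemma upd3_id (X : cfg3 V) v : upd3 X v (X v) = X.
Proof. by apply/ffunP => u; rewrite ffunE; case: eqP => // ->. Qed.

Lemma piE_gen (X : cfg3 V) v :
  Defs.pi th mu X = mb X v (X v != sZero) * (lw (X v) * Kv X v).
Proof. by rewrite -{1}(upd3_id X v) piE_upd. Qed.

Lemma mb_agree v (X Y : cfg3 V) b : agree_off v X Y -> mb Y v b = mb X v b.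
Proof. by move=> H; rewrite /mb (upd2_agree _ H). Qed.

Lemma ct_agree v (X Y : cfg3 V) : agree_off v X Y -> ct Y v = ct X v.
Proof. by move=> H; rewrite /ct /cond1 !(upd2_agree _ H). Qed.

Lemma sGDv_rev (X Y : cfg3 V) v : Omega th mu X -> Omega th mu Y ->
  Defs.pi th mu X * sGDv th mu v X Y = Defs.pi th mu Y * sGDv th mu v Y X.
Proof.
move=> SX SY; rewrite /sGDv /= -/(ct X v) -/(ct Y v).
case Xs: (X v == sStar); case Ys: (Y v == sStar) => /=.
- by rewrite eq_sym; case: eqP => [->|]; rewrite ?mulr0.
- have -> : (Y == X) = false by apply/eqP => E; rewrite E Xs in Ys.
  by rewrite andbF !mulr0.
- have -> : (X == Y) = false by apply/eqP => E; rewrite E Ys in Xs.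
  by rewrite andbF !mulr0.
rewrite !andbT agree_offC.
case A: (agree_off v Y X); last by rewrite !mulr0.
have A' : agree_off v X Y by rewrite agree_offC.
have YE : Y = upd3 X v (Y v) by apply/eqP; rewrite -agree_upd A' eqxx.
case: (eqVneq (X v) (Y v)) => [EXY|NXY].
  by have -> : Y = X by rewrite YE -EXY upd3_id.
rewrite (ct_agree A') (piE_gen X v) (piE_gen Y v) !(mb_agree _ A') (Kv_agree A').
have HD := D_gt0 v SX; rewrite ctE //.
have HD' : mb X v false + mb X v true * th != 0 by rewrite gt_eqF.
move: NXY; case: (I3_cases (X v)) Xs => -> // _; case: (I3_cases (Y v)) Ys => -> // _ _.
- rewrite /lw /=; field; by rewrite HD'.
- rewrite /lw /=; field; by rewrite HD'.
Qed.

Lemma sGD_rev : reversible (P_sGD th mu) (Defs.pi th mu) (Omega th mu).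
Proof.
move=> X Y SX SY; rewrite /P_sGD [LHS]mulrCA [RHS]mulrCA; congr (_ * _).
rewrite !mulr_sumr; apply: eq_bigr => v _; exact: sGDv_rev.
Qed.

End S.

Theorem lemma3p5 (R : realFieldType) (V : finType) (mu : cfg2 V -> R) (th : R) :
  monotone_system mu -> 0 < th < 1 ->
  [/\ inMC th mu (P_cl th mu), inMC th mu (P_sGD th mu) & inMC th mu (P_piGD th mu)].
Proof.
move=> Hms Hth; split; split.
- exact: cl_rev.
- exact: (cl_mono Hth).
- exact: (sGD_rev Hth Hms).
- exact: (sGD_mono Hth Hms).
- exact: piGD_rev.
- exact: (piGD_mono Hth Hms).
Qed.
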